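(* Let $\mathcal{R}$ be a cell space, let $m\in M$ and let $\mathfrak{g}\in G/G_0$. There is an element $g\in\mathfrak{g}$ such that for every $\mathfrak{g}'\in G/G_0$ we have $(m\triangleleft\mathfrak{g})\triangleleft\mathfrak{g}'=m\triangleleft g\cdot\mathfrak{g}'$; in particular, for this $g$, $(m\triangleleft\mathfrak{g})\triangleleft g^{-1}G_0=m$.
   Context: A cell space $\mathcal{R}$ consists of a group $G$ acting transitively on the left on a nonempty set $M$ via $\triangleright$, a point $m_0\in M$ and a family $(g_{m_0,m})_{m\in M}$ in $G$ with $g_{m_0,m}\triangleright m_0=m$. $G_0$ is the stabiliser of $m_0$, $G/G_0$ the set of left cosets (elements are subsets of $G$), with $G$ acting by $g\cdot hG_0=ghG_0$. The right semi-action $\triangleleft\colon M\times G/G_0\to M$ is $m\triangleleft gG_0=g_{m_0,m}g\triangleright m_0$. *)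

(* Defs.v *)
From Stdlib Require Import ClassicalEpsilon.
Set Implicit Arguments.

Record CellSpace := {
  G : Type;
  gmul : G -> G -> G;
  ginv : G -> G;
  gone : G;
  gmulA : forall x y z, gmul x (gmul y z) = gmul (gmul x y) z;
  gmul1l : forall x, gmul gone x = x;
  gmul1r : forall x, gmul x gone = x;
  gmulVl : forall x, gmul (ginv x) x = gone;
  gmulVr : forall x, gmul x (ginv x) = gone;
  M : Type;
  act : G -> M -> M;
  act1 : forall m, act gone m = m;
  actM : forall g h m, act (gmul g h) m = act g (act h m);
  act_trans : forall m m', exists g, act g m = m';
  m0 : M;
  gm0 : M -> G;
  gm0_spec : forall m, act (gm0 m) m0 = m
}.

Section Cosets.
Variable R : CellSpace.

Definition G0 (k : G R) : Prop := act R k (m0 R) = m0 R.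

Definition lcoset (g : G R) : G R -> Prop :=
  fun x => exists k, G0 k /\ x = gmul R g k.

Definition is_lcoset (C : G R -> Prop) : Prop := exists g, C = lcoset g.

Definition Coset := { C : G R -> Prop | is_lcoset C }.

Definition mkCoset (g : G R) : Coset := exist _ (lcoset g) (ex_intro _ g eq_refl).

Definition rep (C : Coset) : G R :=
  proj1_sig (constructive_indefinite_description _ (proj2_sig C)).

Definition cact (g : G R) (C : Coset) : Coset := mkCoset (gmul R g (rep C)).

(* right semi-action  m <| gG0 = g_{m0,m} g |> m0 *)
Definition rsa (m : M R) (C : Coset) : M R := act R (gmul R (gm0 R m) (rep C)) (m0 R).

End Cosets.

(* Main.v *)
Require Import Defs.
From Stdlib Require Import ClassicalEpsilon.

Lemma rep_eq (R : CellSpace) (C : Coset R) : proj1_sig C = lcoset _ (rep C).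
Proof.
  unfold rep. destruct (constructive_indefinite_description _ (proj2_sig C)) as [r Hr]. exact Hr.
Qed.

Lemma rep_mk (R : CellSpace) (h : G R) :
  exists k, G0 _ k /\ rep (mkCoset _ h) = gmul R h k.
Proof.
  pose proof (rep_eq _ (mkCoset _ h)) as E. simpl in E.
  assert (H : lcoset _ (rep (mkCoset _ h)) (rep (mkCoset _ h))).
  { exists (gone R). split. unfold G0. apply act1. symmetry; apply gmul1r. }
  rewrite <- E in H. exact H.
Qed.

Lemma act_G0 (R : CellSpace) (a k : G R) : G0 _ k -> act R (gmul R a k) (m0 R) = act R a (m0 R).
Proof. intro Hk. rewrite actM. unfold G0 in Hk. rewrite Hk. reflexivity. Qed.

Theorem lemma4 (R : CellSpace) (m : M R) (c : Coset R) :
  exists g : G R,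
    proj1_sig c g /\
    (forall c' : Coset R, rsa (rsa m c) c' = rsa m (cact g c')) /\
    rsa (rsa m c) (@mkCoset R (ginv R g)) = m.
Proof.
  set (m' := rsa m c).
  set (g := gmul R (ginv R (gm0 R m)) (gm0 R m')).
  exists g. split; [|split].
  - rewrite rep_eq. exists (gmul R (ginv R (rep c)) g). split.
    + unfold G0, g. rewrite !actM, gm0_spec. unfold m', rsa.
      rewrite <- (actM R (ginv R (gm0 R m))), gmulA, gmulVl, gmul1l.
      rewrite <- actM, gmulVl, act1. reflexivity.
    + rewrite gmulA, gmulVr, gmul1l. reflexivity.
  - intro c'. unfold rsa at 2, cact.
    destruct (rep_mk _ (gmul R g (rep c'))) as [k [Hk E]]. rewrite E.
    rewrite gmulA, act_G0 by exact Hk.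
    unfold g. rewrite !gmulA, gmulVr, gmul1l. reflexivity.
  - unfold rsa at 1. fold m'.
    destruct (rep_mk _ (ginv R g)) as [k [Hk E]]. rewrite E, gmulA, act_G0 by exact Hk.
    unfold g. rewrite actM.
    assert (Hi : ginv R (gmul R (ginv R (gm0 R m)) (gm0 R m')) = gmul R (ginv R (gm0 R m')) (gm0 R m)).
    { assert (Hx : forall x y : G R, gmul R x y = gone R -> y = ginv R x).
      { intros x y Hxy. rewrite <- (gmul1l R y), <- (gmulVl R x), <- gmulA, Hxy, gmul1r. reflexivity. }
      symmetry. apply Hx. rewrite <- gmulA, (gmulA R (gm0 R m')), gmulVr, gmul1l, gmulVl. reflexivity. }
    rewrite Hi, actM, gm0_spec, <- actM, gmulVr, act1. reflexivity.
Qed.
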